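(* Let $X$ be a $T_1$ space and $\mathcal C$ a pre-pseudogroup on $X$. There exist a pseudogroup sheaf $\hat{\mathcal C}$ on $X$ and a morphism $\mathcal C\to\hat{\mathcal C}$ of pre-pseudogroups such that for every pseudogroup sheaf $\mathcal D$ on $X$ and every morphism $\mathcal C\to\mathcal D$ there is a unique morphism $\hat{\mathcal C}\to\mathcal D$ making the triangle $\mathcal C\to\hat{\mathcal C}\to\mathcal D$ commute.
   Context: $X_{top}$ denotes the set of open subsets of $X$, regarded as a category with exactly one morphism $U\to V$ iff $U\subseteq V$. Let $\mathcal C$ be a small category with $\mathrm{Ob}(\mathcal C)=X_{top}$ containing $X_{top}$ as a subcategory (identity on objects). For each open $V$, $\mathcal C(-,V)$ is a presheaf of sets on $X$ (restriction along $U'\subseteq U$ = precomposition with the inclusion morphism). For $x\in X$ let $\mathcal C_x(V)=\operatorname{colim}_{U\ni x}\mathcal C(U,V)$ (germ of $f\in\mathcal C(U,V)$ at $x$ written $f_x$); postcomposition with inclusions makes this functorial in $V$, and for $y\in X$ let $\mathcal C_x^y=\lim_{V\ni y}\mathcal C_x(V)$ (limit over open neighbourhoods of $y$), with projections $\mathcal C_x^y\to\mathcal C_x(V)$. Composition in $\mathcal C$ induces $\mathcal C_y^z\times\mathcal C_x^y\to\mathcal C_x^z$: given $\varphi\in\mathcal C_x^y,\psi\in\mathcal C_y^z$ and open $W\ni z$, choose $g\in\mathcal C(V,W)$, $y\in V$, representing the component $\psi_W$, and $f\in\mathcal C(U,V)$ representing $\varphi_V$; the $W$-component of $\psi\circ\varphi$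 is $(g\circ f)_x$. This defines a category $\mathcal C^\star$ with objects the points of $X$ and $\mathcal C^\star(x,y)=\mathcal C_x^y$. For $X$ a $T_1$ space, a pre-pseudogroup on $X$ is such a $\mathcal C$ satisfying: (1) $\mathrm{Ob}(\mathcal C)=\mathrm{Ob}(X_{top})$; (2) for every open $V$ and $x\in X$, the map $\coprod_{y\in V}\mathcal C_x^y\to\mathcal C_x(V)$ induced by the projections is a bijection; (3) $\mathcal C^\star$ is a groupoid. A pseudogroup sheaf on $X$ is a pre-pseudogroup such that moreover (4) each presheaf $\mathcal C(-,V)$ is a sheaf. A morphism of pre-pseudogroups $\mathcal C\to\mathcal D$ is a functor whose composite with the embedding $X_{top}\subseteq\mathcal C$ equals the embedding $X_{top}\subseteq\mathcal D$. *)

(* Defs.v *)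
Set Implicit Arguments.
Unset Strict Implicit.

Record topology (X : Type) : Type := {
  open : (X -> Prop) -> Prop;
  open_full : open (fun _ => True);
  open_inter : forall U V, open U -> open V -> open (fun x => U x /\ V x);
  open_union : forall (I : Type) (F : I -> X -> Prop),
      (forall i, open (F i)) -> open (fun x => exists i, F i x)
}.

Definition T1 {X : Type} (T : topology X) : Prop :=
  forall x y : X, x <> y -> exists U, open T U /\ U x /\ ~ U y.

Record Opens {X : Type} (T : topology X) : Type := {
  carrier :> X -> Prop;
  carrier_open : open T carrier
}.

Definition sub {X} {T : topology X} (U V : Opens T) : Prop := forall x, U x -> V x.

Definition ointer {X} {T : topology X} (U V : Opens T) : Opens T :=
  {| carrier := fun x => U x /\ V x;
     carrier_open := @open_inter X T U V (carrier_open U) (carrier_open V) |}.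

Definition sub_interl {X} {T : topology X} (U V : Opens T) : sub (ointer U V) U :=
  fun x h => proj1 h.
Definition sub_interr {X} {T : topology X} (U V : Opens T) : sub (ointer U V) V :=
  fun x h => proj2 h.

Record PreCat {X : Type} (T : topology X) : Type := {
  hom : Opens T -> Opens T -> Type;
  comp : forall U V W, hom V W -> hom U V -> hom U W;
  idm : forall U, hom U U;
  incl : forall U V, sub U V -> hom U V;
  comp_assoc : forall U V W Z (h : hom W Z) (g : hom V W) (f : hom U V),
      comp h (comp g f) = comp (comp h g) f;
  comp_id_l : forall U V (f : hom U V), comp (idm V) f = f;
  comp_id_r : forall U V (f : hom U V), comp f (idm U) = f;
  incl_id : forall U (h : sub U U), incl h = idm U;
  incl_comp : forall U V W (h1 : sub V W) (h2 : sub U V) (h3 : sub U W),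
      comp (incl h1) (incl h2) = incl h3
}.
Arguments hom {X T} p U V : rename.
Arguments comp {X T} p {U V W} _ _.
Arguments idm {X T} p U.
Arguments incl {X T} p {U V} _.

(* A trivial instance (also fixes the universe of hom to contain X). *)
Definition trivial_precat {X : Type} (T : topology X) : PreCat T :=
  {| hom := fun _ _ => X -> X;
     comp := fun _ _ _ g f x => g (f x);
     idm := fun _ x => x;
     incl := fun _ _ _ x => x;
     comp_assoc := fun _ _ _ _ _ _ _ => eq_refl;
     comp_id_l := fun _ _ _ => eq_refl;
     comp_id_r := fun _ _ _ => eq_refl;
     incl_id := fun _ _ => eq_refl;
     incl_comp := fun _ _ _ _ _ _ => eq_refl |}.

Definition bij {A B : Type} (f : A -> B) : Prop :=
  (forall a b, f a = f b -> a = b) /\ (forall c, exists a, f a = c).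

Section Germs.
Context {X : Type} {T : topology X} (C : PreCat T).

(* a representative of a germ at x of an element of C(-,V): (U, x ∈ U, f ∈ C(U,V)) *)
Definition rep (x : X) (V : Opens T) : Type :=
  { U : Opens T & { _ : U x & hom C U V } }.
Definition rdom {x V} (a : rep x V) : Opens T := projT1 a.
Definition rpt {x V} (a : rep x V) : rdom a x := projT1 (projT2 a).
Definition rmap {x V} (a : rep x V) : hom C (rdom a) V := projT2 (projT2 a).
Definition mkrep {x : X} {V U : Opens T} (hx : U x) (f : hom C U V) : rep x V :=
  existT _ U (existT _ hx f).

Definition germ_rel {x V} (a b : rep x V) : Prop :=
  exists W : Opens T, W x /\
    exists (ha : sub W (rdom a)) (hb : sub W (rdom b)),
      comp C (rmap a) (incl C ha) = comp C (rmap b) (incl C hb).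

(* C_x(V) = colim_{U ∋ x} C(U,V), as the set of equivalence classes *)
Definition germ (x : X) (V : Opens T) : Type :=
  { P : rep x V -> Prop | exists a, forall b, P b <-> germ_rel a b }.

Definition germ_mem {x V} (g : germ x V) (a : rep x V) : Prop := proj1_sig g a.

Definition germ_of {x : X} {V U : Opens T} (hx : U x) (f : hom C U V) : germ x V :=
  exist (fun P : rep x V -> Prop => exists a, forall b, P b <-> germ_rel a b)
    (germ_rel (mkrep hx f))
    (ex_intro (fun a => forall b, germ_rel (mkrep hx f) b <-> germ_rel a b)
       (mkrep hx f) (fun b => iff_refl _)).

(* C_x^y = lim_{V ∋ y} C_x(V): compatible families of germs under
   postcomposition with inclusions *)
Definition stalk_lim (x y : X) : Type :=
  { phi : forall V : Opens T, V y -> germ x V |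
    forall (V V' : Opens T) (h : sub V' V) (hy' : V' y) (hy : V y) (a : rep x V'),
      germ_mem (phi V' hy') a ->
      phi V hy = germ_of (rpt a) (comp C (incl C h) (rmap a)) }.

Definition comp_of {x y : X} (phi : stalk_lim x y) (V : Opens T) (hy : V y) : germ x V :=
  proj1_sig phi V hy.

Definition is_id {x : X} (phi : stalk_lim x x) : Prop :=
  forall (W : Opens T) (hx : W x), comp_of phi hx = germ_of hx (idm C W).

Definition comp_rel {x y z : X} (psi : stalk_lim y z) (phi : stalk_lim x y)
    (chi : stalk_lim x z) : Prop :=
  forall (W : Opens T) (hz : W z),
    exists (V : Opens T) (hy : V y) (g : hom C V W)
           (U : Opens T) (hx : U x) (f : hom C U V),
      germ_mem (comp_of psi hz) (mkrep hy g) /\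
      germ_mem (comp_of phi hy) (mkrep hx f) /\
      comp_of chi hz = germ_of hx (comp C g f).

Definition cond2 : Prop :=
  forall (V : Opens T) (x : X),
    bij (fun p : { y : { y : X | V y } & stalk_lim x (proj1_sig y) } =>
           comp_of (projT2 p) (proj2_sig (projT1 p))).

Definition cond3 : Prop :=
  forall (x y : X) (phi : stalk_lim x y),
    exists (psi : stalk_lim y x) (ix : stalk_lim x x) (iy : stalk_lim y y),
      is_id ix /\ is_id iy /\ comp_rel psi phi ix /\ comp_rel phi psi iy.

Definition cond4 : Prop :=
  forall (V U : Opens T) (I : Type) (Ui : I -> Opens T)
         (hsub : forall i, sub (Ui i) U)
         (hcov : forall x, U x -> exists i, Ui i x)
         (f : forall i, hom C (Ui i) V),
    (forall i j, comp C (f i) (incl C (@sub_interl X T (Ui i) (Ui j)))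
               = comp C (f j) (incl C (@sub_interr X T (Ui i) (Ui j)))) ->
    exists g : hom C U V,
      (forall i, comp C g (incl C (hsub i)) = f i) /\
      (forall g' : hom C U V, (forall i, comp C g' (incl C (hsub i)) = f i) -> g' = g).

End Germs.

(* pre-pseudogroup (condition (1) is built into the type PreCat);
   the T1 hypothesis on X is a separate hypothesis of the theorem *)
Definition pre_pseudogroup {X} {T : topology X} (C : PreCat T) : Prop :=
  cond2 C /\ cond3 C.

Definition pseudogroup_sheaf {X} {T : topology X} (C : PreCat T) : Prop :=
  pre_pseudogroup C /\ cond4 C.

Record PPMor {X} {T : topology X} (C D : PreCat T) : Type := {
  fmap : forall U V, hom C U V -> hom D U V;
  fmap_comp : forall U V W (g : hom C V W) (f : hom C U V),
      fmap (comp C g f) = comp D (fmap g) (fmap f);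
  fmap_id : forall U, fmap (idm C U) = idm D U;
  fmap_incl : forall U V (h : sub U V), fmap (incl C h) = incl D h
}.
Arguments fmap {X T C D} p {U V} _ : rename.

(* Main.v *)
Require Import Defs.
From Stdlib Require Import ProofIrrelevance FunctionalExtensionality PropExtensionality IndefiniteDescription.

Lemma sig_eq {A : Type} {P : A -> Prop} (a b : sig P) : proj1_sig a = proj1_sig b -> a = b.
Proof. destruct a as [a pa], b as [b pb]; simpl; intros ->. f_equal. apply proof_irrelevance. Qed.

Definition sub_refl {X} {T : topology X} (U : Opens T) : sub U U := fun x h => h.

Section Gen.
Context {X : Type} {T : topology X} {C : PreCat T}.

Lemma incl_pi {U V : Opens T} (h1 h2 : sub U V) : incl C h1 = incl C h2.
Proof. f_equal; apply proof_irrelevance. Qed.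

Lemma cii {U V W Z : Opens T} (f : hom C W Z) (h1 : sub V W) (h2 : sub U V) (h3 : sub U W) :
  comp C (comp C f (incl C h1)) (incl C h2) = comp C f (incl C h3).
Proof. rewrite <- comp_assoc, (incl_comp C h1 h2 h3). reflexivity. Qed.

Lemma incl_refl_id {U V : Opens T} (f : hom C U V) (h : sub U U) : comp C f (incl C h) = f.
Proof. rewrite incl_id, comp_id_r; reflexivity. Qed.

Lemma incl_refl_idl {U V : Opens T} (f : hom C U V) (h : sub V V) : comp C (incl C h) f = f.
Proof. rewrite incl_id, comp_id_l; reflexivity. Qed.

Lemma grel_refl {x V} (a : rep C x V) : germ_rel a a.
Proof. exists (rdom a). split. apply rpt. exists (sub_refl _), (sub_refl _). reflexivity. Qed.

Lemma grel_sym {x V} (a b : rep C x V) : germ_rel a b -> germ_rel b a.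
Proof. intros [W [hx [ha [hb e]]]]. exists W; split; [exact hx|]. exists hb, ha; auto. Qed.

Lemma grel_trans {x V} (a b c : rep C x V) : germ_rel a b -> germ_rel b c -> germ_rel a c.
Proof.
  intros [W1 [hx1 [ha [hb e1]]]] [W2 [hx2 [hb' [hc e2]]]].
  exists (ointer W1 W2). split; [split; assumption|].
  exists (fun z hz => ha z (proj1 hz)), (fun z hz => hc z (proj2 hz)).
  rewrite <- (cii (rmap a) ha (@sub_interl _ _ W1 W2)).
  rewrite e1, (cii (rmap b) hb (@sub_interl _ _ W1 W2) (fun z hz => hb' z (proj2 hz))).
  rewrite <- (cii (rmap b) hb' (@sub_interr _ _ W1 W2) (fun z hz => hb' z (proj2 hz))), e2. apply cii.
Qed.

Lemma germ_eq_mem {x V} (g : germ C x V) (a : rep C x V) :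
  germ_mem g a -> g = germ_of (rpt a) (rmap a).
Proof.
  destruct g as [P [a0 H0]]; unfold germ_mem; simpl; intro Ha.
  apply sig_eq; simpl. apply functional_extensionality; intro b.
  apply propositional_extensionality.
  assert (E : mkrep (rpt a) (rmap a) = a) by (destruct a as [U [h f]]; reflexivity).
  rewrite E, H0. apply H0 in Ha. split; intro Hb.
  - apply grel_trans with a0; [apply grel_sym|]; assumption.
  - apply grel_trans with a; assumption.
Qed.

Lemma germ_has_mem {x V} (g : germ C x V) : exists a, germ_mem g a.
Proof. destruct g as [P [a0 H0]]. exists a0. unfold germ_mem; simpl. apply H0, grel_refl. Qed.

Lemma mem_rel {x V} (g : germ C x V) a b : germ_mem g a -> germ_rel a b -> germ_mem g b.
Proof.
  destruct g as [P [a0 H0]]; unfold germ_mem; simpl. intros Ha Hab.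
  apply H0. apply H0 in Ha. eapply grel_trans; eauto.
Qed.

Lemma mem_mem_rel {x V} (g : germ C x V) a b : germ_mem g a -> germ_mem g b -> germ_rel a b.
Proof.
  destruct g as [P [a0 H0]]; unfold germ_mem; simpl. intros Ha Hb.
  apply H0 in Ha; apply H0 in Hb. eapply grel_trans; [apply grel_sym|]; eauto.
Qed.

Lemma mem_mem_eq {x V} (g1 g2 : germ C x V) a : germ_mem g1 a -> germ_mem g2 a -> g1 = g2.
Proof. intros H1 H2. rewrite (germ_eq_mem _ _ H1), (germ_eq_mem _ _ H2). reflexivity. Qed.

Lemma germ_of_eq {x : X} {V U U' : Opens T} (hx : U x) (hx' : U' x) (f : hom C U V) (f' : hom C U' V) :
  germ_rel (mkrep hx f) (mkrep hx' f') -> germ_of hx f = germ_of hx' f'.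
Proof. intro H. apply (germ_eq_mem (germ_of hx f) (mkrep hx' f') H). Qed.

Lemma germ_of_rel {x : X} {V U U' : Opens T} (hx : U x) (hx' : U' x) (f : hom C U V) (f' : hom C U' V) :
  germ_of hx f = germ_of hx' f' -> germ_rel (mkrep hx f) (mkrep hx' f').
Proof.
  intro H. change (germ_mem (germ_of hx f) (mkrep hx' f')). rewrite H. apply grel_refl.
Qed.

Lemma germ_mem_iff {x : X} {V U : Opens T} (g : germ C x V) (hx : U x) (f : hom C U V) :
  germ_mem g (mkrep hx f) <-> g = germ_of hx f.
Proof.
  split; intro H.
  - apply (germ_eq_mem _ _ H).
  - subst. apply grel_refl.
Qed.

Lemma germ_pi {x : X} {V U : Opens T} (hx hx' : U x) (f : hom C U V) : germ_of hx f = germ_of hx' f.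
Proof. f_equal; apply proof_irrelevance. Qed.

Lemma germ_restr {x : X} {V U Q : Opens T} (hQ : sub Q U) (hxQ : Q x) (hxU : U x) (f : hom C U V) :
  germ_of hxQ (comp C f (incl C hQ)) = germ_of hxU f.
Proof.
  apply germ_of_eq. exists Q. split; [exact hxQ|]. exists (sub_refl Q), hQ. simpl.
  apply incl_refl_id.
Qed.

Lemma germ_ext {x : X} {V U U' W : Opens T} (hx : U x) (hx' : U' x) (hxW : W x) (f : hom C U V) (f' : hom C U' V)
  (ha : sub W U) (hb : sub W U') :
  comp C f (incl C ha) = comp C f' (incl C hb) -> germ_of hx f = germ_of hx' f'.
Proof. intro e. apply germ_of_eq. exists W. split; [exact hxW|]. exists ha, hb. exact e. Qed.

Lemma germ_postcomp {x : X} {V W U U' : Opens T} (hx : U x) (hx' : U' x) (f : hom C U V) (f' : hom C U' V) (g : hom C V W) :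
  germ_of hx f = germ_of hx' f' -> germ_of hx (comp C g f) = germ_of hx' (comp C g f').
Proof.
  intro H. apply germ_of_rel in H. destruct H as [Q [hq [ha [hb e]]]].
  apply germ_of_eq. exists Q. split; [exact hq|]. exists ha, hb. unfold rmap, rdom, mkrep in *; simpl in *.
  rewrite <- !comp_assoc, e. reflexivity.
Qed.

Lemma germ_rep {x V} (g : germ C x V) : exists (U : Opens T) (hx : U x) (f : hom C U V), g = germ_of hx f.
Proof.
  destruct (germ_has_mem g) as [a Ha]. exists (rdom a), (rpt a), (rmap a).
  apply germ_eq_mem; exact Ha.
Qed.

Lemma comp_of_pi {x y} (phi : stalk_lim C x y) (V : Opens T) (h1 h2 : V y) : comp_of phi h1 = comp_of phi h2.
Proof. f_equal; apply proof_irrelevance. Qed.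

Lemma stalk_compat {x y} (phi : stalk_lim C x y) (V V' : Opens T) (h : sub V' V) (hy' : V' y) (hy : V y)
  (U' : Opens T) (hx : U' x) (f : hom C U' V') :
  comp_of phi hy' = germ_of hx f -> comp_of phi hy = germ_of hx (comp C (incl C h) f).
Proof.
  intro H. apply (proj2_sig phi V V' h hy' hy (mkrep hx f)).
  change (germ_mem (comp_of phi hy') (mkrep hx f)). rewrite H. apply grel_refl.
Qed.

Lemma stalk_rep {x y} (phi : stalk_lim C x y) (V : Opens T) (hy : V y) :
  exists (U : Opens T) (hx : U x) (f : hom C U V), comp_of phi hy = germ_of hx f.
Proof. apply germ_rep. Qed.

Lemma stalk_ext {x y} (p q : stalk_lim C x y) :
  (forall (V : Opens T) (hy : V y), comp_of p hy = comp_of q hy) -> p = q.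
Proof.
  intro H. apply sig_eq. apply functional_extensionality_dep; intro V.
  apply functional_extensionality_dep; intro hy. apply H.
Qed.

End Gen.


Section Hat.
Context {X : Type} {T : topology X} (C : PreCat T) (HC2 : cond2 C).

Lemma surj2 {x : X} {V : Opens T} (s : germ C x V) :
  exists (y : X) (hy : V y) (phi : stalk_lim C x y), comp_of phi hy = s.
Proof. destruct (proj2 (HC2 V x) s) as [[[y hy] phi] E]. exists y, hy, phi. exact E. Qed.

Lemma KL {x : X} {V : Opens T} (s : germ C x V) :
  exists (y : X) (hy : V y) (phi : stalk_lim C x y), comp_of phi hy = s /\
   forall (V1 : Opens T) (hV : sub V1 V) (U1 : Opens T) (hx : U1 x) (f : hom C U1 V1),
     germ_of hx (comp C (incl C hV) f) = s -> exists hy1 : V1 y, comp_of phi hy1 = germ_of hx f.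
Proof.
  destruct (surj2 s) as [y [hy [phi Hs]]]. exists y, hy, phi. split; [exact Hs|].
  intros V1 hV U1 hx f E.
  destruct (surj2 (germ_of hx f)) as [y1 [hy1 [phi1 H1]]].
  assert (H2 : comp_of phi1 (hV y1 hy1) = s).
  { rewrite <- E. apply (stalk_compat phi1 V V1 hV hy1 _ U1 hx f H1). }
  assert (Heq := proj1 (HC2 V x)
     (existT (fun y0 : {y0 : X | V y0} => stalk_lim C x (proj1_sig y0)) (exist _ y1 (hV y1 hy1)) phi1)
     (existT (fun y0 : {y0 : X | V y0} => stalk_lim C x (proj1_sig y0)) (exist _ y hy) phi)).
  simpl in Heq. specialize (Heq (eq_trans H2 (eq_sym Hs))).
  assert (E2 := f_equal (fun p : {y0 : {y0 : X | V y0} & stalk_lim C x (proj1_sig y0)} =>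
       existT (fun y0 => stalk_lim C x y0) (proj1_sig (projT1 p)) (projT2 p)) Heq). simpl in E2.
  assert (Ey : y1 = y) by exact (f_equal (@projT1 _ _) E2). subst y1.
  apply inj_pair2 in E2. subst phi1. exists hy1. exact H1.
Qed.

Definition fam (U V : Opens T) := forall x, U x -> germ C x V.
Definition repon {V' V W : Opens T} (s : fam V W) (g : hom C V' W) : Prop :=
  forall z (hz : V' z) (hz' : V z), s z hz' = germ_of hz g.
Definition locrep {U V : Opens T} (s : fam U V) : Prop :=
  forall x (hx : U x), exists (U' : Opens T) (hx' : U' x) (f : hom C U' V), sub U' U /\ repon s f.
Definition Chom (U V : Opens T) : Type := {s : fam U V | locrep s}.

Definition Pgc {x : X} {V W : Opens T} (s : fam V W) (g0 : germ C x V) (b : rep C x W) : Prop :=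
  exists (V' : Opens T) (hV : sub V' V) (U' : Opens T) (hx : U' x) (f : hom C U' V') (g : hom C V' W),
    germ_of hx (comp C (incl C hV) f) = g0 /\ repon s g /\ germ_rel (mkrep hx (comp C g f)) b.

Lemma core {x : X} {V W : Opens T} (s : fam V W) (g0 : germ C x V)
  (V1 : Opens T) (h1 : sub V1 V) (U1 : Opens T) (hx1 : U1 x) (f1 : hom C U1 V1) (g1 : hom C V1 W)
  (V2 : Opens T) (h2 : sub V2 V) (U2 : Opens T) (hx2 : U2 x) (f2 : hom C U2 V2) (g2 : hom C V2 W) :
  germ_of hx1 (comp C (incl C h1) f1) = g0 -> repon s g1 ->
  germ_of hx2 (comp C (incl C h2) f2) = g0 -> repon s g2 ->
  germ_of hx1 (comp C g1 f1) = germ_of hx2 (comp C g2 f2).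
Proof.
  intros e1 r1 e2 r2. destruct (KL g0) as [y [hy [phi [Hphi Hk]]]].
  destruct (Hk V1 h1 U1 hx1 f1 e1) as [hy1 E1]. destruct (Hk V2 h2 U2 hx2 f2 e2) as [hy2 E2].
  assert (G : germ_of hy1 g1 = germ_of hy2 g2).
  { rewrite <- (r1 y hy1 hy), <- (r2 y hy2 hy). reflexivity. }
  apply germ_of_rel in G. destruct G as [Wq [hyW [ha [hb eg]]]].
  unfold rmap, rdom, mkrep in *; simpl in *.
  destruct (stalk_rep phi Wq hyW) as [U3 [hx3 [h Hh]]].
  assert (F1 := stalk_compat phi V1 Wq ha hyW hy1 U3 hx3 h Hh).
  assert (F2 := stalk_compat phi V2 Wq hb hyW hy2 U3 hx3 h Hh).
  rewrite E1 in F1. rewrite E2 in F2.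
  rewrite (germ_postcomp hx1 hx3 f1 _ g1 F1), (germ_postcomp hx2 hx3 f2 _ g2 F2).
  rewrite !comp_assoc, eg. reflexivity.
Qed.

Lemma gcomp_ex {x : X} {V W : Opens T} (s : Chom V W) (g0 : germ C x V) :
  exists (V' : Opens T) (hV : sub V' V) (U' : Opens T) (hx : U' x) (f : hom C U' V') (g : hom C V' W),
    germ_of hx (comp C (incl C hV) f) = g0 /\ repon (proj1_sig s) g.
Proof.
  destruct (surj2 g0) as [y [hy [phi Hs]]].
  destruct (proj2_sig s y hy) as [V' [hy' [g [hsub hr]]]].
  destruct (stalk_rep phi V' hy') as [U' [hx [f Hf]]].
  assert (E := stalk_compat phi V V' hsub hy' hy U' hx f Hf). rewrite Hs in E.
  exists V', hsub, U', hx, f, g. split; [exact (eq_sym E)|exact hr].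
Qed.

Lemma gcomp_wf {x : X} {V W : Opens T} (s : Chom V W) (g0 : germ C x V) :
  exists a, forall b, Pgc (proj1_sig s) g0 b <-> germ_rel a b.
Proof.
  destruct (gcomp_ex s g0) as [V' [hsub [U' [hx [f [g [E hr]]]]]]].
  exists (mkrep hx (comp C g f)). intro b. split.
  - intros [V2 [h2 [U2 [hx2 [f2 [g2 [e2 [r2 Hb]]]]]]]]. eapply grel_trans; [|exact Hb].
    apply germ_of_rel. apply (core (proj1_sig s) g0 V' hsub U' hx f g V2 h2 U2 hx2 f2 g2); auto.
  - intro Hb. exists V', hsub, U', hx, f, g. auto.
Qed.

Definition gcomp {x : X} {V W : Opens T} (s : Chom V W) (g0 : germ C x V) : germ C x W :=
  exist _ (Pgc (proj1_sig s) g0) (gcomp_wf s g0).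

Lemma gcomp_ch {x : X} {V W : Opens T} (s : Chom V W) (g0 : germ C x V) (V' : Opens T) (hV : sub V' V)
  (U' : Opens T) (hx : U' x) (f : hom C U' V') (g : hom C V' W) :
  germ_of hx (comp C (incl C hV) f) = g0 -> repon (proj1_sig s) g ->
  gcomp s g0 = germ_of hx (comp C g f).
Proof.
  intros e r. apply (germ_eq_mem (gcomp s g0) (mkrep hx (comp C g f))).
  unfold germ_mem, gcomp; simpl. exists V', hV, U', hx, f, g.
  split; [exact e|]. split; [exact r|]. apply grel_refl.
Qed.

Lemma gcomp_rep {x : X} {V W V' U' : Opens T} (s : Chom V W) (hV : sub V' V) (g : hom C V' W)
  (hx : U' x) (f : hom C U' V') :
  repon (proj1_sig s) g -> gcomp s (germ_of hx (comp C (incl C hV) f)) = germ_of hx (comp C g f).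
Proof. intro r. apply (gcomp_ch s _ V' hV U' hx f g); [reflexivity|exact r]. Qed.

Lemma eta_loc {U V : Opens T} (f : hom C U V) : locrep (fun x (hx : U x) => germ_of hx f).
Proof. intros x hx. exists U, hx, f. split; [exact (sub_refl U)|]. intros z hz hz'. apply germ_pi. Qed.

Definition eta {U V : Opens T} (f : hom C U V) : Chom U V :=
  exist _ (fun x (hx : U x) => germ_of hx f) (eta_loc f).

Lemma gcomp_eta {x : X} {U V W : Opens T} (hx : U x) (f : hom C U V) (g : hom C V W) :
  gcomp (eta g) (germ_of hx f) = germ_of hx (comp C g f).
Proof.
  pattern f at 1. rewrite <- (incl_refl_idl f (sub_refl V)). apply gcomp_rep.
  intros z hz hz'. apply germ_pi.
Qed.

Lemma repon_restr {V' V W Q : Opens T} (s : fam V W) (g : hom C V' W) (hsub : sub Q V') :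
  repon s g -> repon s (comp C g (incl C hsub)).
Proof. intros r z hz hz'. rewrite (germ_restr hsub hz (hsub z hz) g). apply r. Qed.

Lemma gcomp_incl {x : X} {U W Q : Opens T} (s : Chom U W) (h : sub Q U) (hxQ : Q x) (hxU : U x) :
  gcomp s (germ_of hxQ (incl C h)) = proj1_sig s x hxU.
Proof.
  destruct (proj2_sig s x hxU) as [V' [hx' [g [hsub hr]]]].
  assert (hxR : ointer Q V' x) by (split; assumption).
  rewrite <- (germ_restr (@sub_interl _ _ Q V') hxR hxQ (incl C h)).
  assert (E : comp C (incl C h) (incl C (@sub_interl _ _ Q V'))
            = comp C (incl C hsub) (incl C (@sub_interr _ _ Q V'))).
  { rewrite (incl_comp C h (@sub_interl _ _ Q V') (fun z hz => hsub z (proj2 hz))).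
    rewrite (incl_comp C hsub (@sub_interr _ _ Q V') (fun z hz => hsub z (proj2 hz))). reflexivity. }
  rewrite E, (gcomp_rep s hsub g hxR _ hr).
  rewrite (germ_restr (@sub_interr _ _ Q V') hxR hx' g). symmetry; apply hr.
Qed.

Lemma comp_local {U V W : Opens T} (s : Chom V W) (t : Chom U V) (x : X) (hx : U x) :
  exists (Q : Opens T) (hxQ : Q x) (hQ : sub Q U) (U1 : Opens T) (hU1 : sub U1 U) (f1 : hom C U1 V)
    (hQ1 : sub Q U1) (V' : Opens T) (hV : sub V' V) (f : hom C Q V') (g : hom C V' W),
    repon (proj1_sig t) f1 /\ repon (proj1_sig s) g /\
    comp C (incl C hV) f = comp C f1 (incl C hQ1) /\
    (forall z (hz : Q z) (hzU : U z), gcomp s (proj1_sig t z hzU) = germ_of hz (comp C g f)).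
Proof.
  destruct (proj2_sig t x hx) as [U1 [hx1 [f1 [hs1 hr1]]]].
  destruct (gcomp_ex s (germ_of hx1 f1)) as [V' [hV [U' [hx' [f [g [e r]]]]]]].
  apply germ_of_rel in e. destruct e as [Q [hxQ [ha [hb eq]]]].
  unfold rmap, rdom, mkrep in *; simpl in *.
  exists Q, hxQ, (fun z hz => hs1 z (hb z hz)), U1, hs1, f1, hb, V', hV, (comp C f (incl C ha)), g.
  split; [exact hr1|]. split; [exact r|]. split; [rewrite comp_assoc; exact eq|].
  intros z hz hzU. rewrite (hr1 z (hb z hz) hzU). rewrite <- (germ_restr hb hz (hb z hz) f1).
  rewrite <- eq, <- comp_assoc. apply gcomp_rep. exact r.
Qed.

Lemma Ccomp_loc {U V W : Opens T} (s : Chom V W) (t : Chom U V) :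
  locrep (fun x (hx : U x) => gcomp s (proj1_sig t x hx)).
Proof.
  intros x hx.
  destruct (comp_local s t x hx) as [Q [hxQ [hQ [_ [_ [_ [_ [V' [hV [f [g [_ [_ [_ H]]]]]]]]]]]]]].
  exists Q, hxQ, (comp C g f). split; [exact hQ|]. intros z hz hz'. apply H.
Qed.

Definition Ccomp {U V W : Opens T} (s : Chom V W) (t : Chom U V) : Chom U W :=
  exist _ (fun x (hx : U x) => gcomp s (proj1_sig t x hx)) (Ccomp_loc s t).

Lemma Chom_ext {U V : Opens T} (s t : Chom U V) :
  (forall x (hx : U x), proj1_sig s x hx = proj1_sig t x hx) -> s = t.
Proof.
  intro H. apply sig_eq. apply functional_extensionality_dep; intro x.
  apply functional_extensionality_dep; intro hx. apply H.
Qed.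

Lemma Ccomp_id_l {U V : Opens T} (t : Chom U V) : Ccomp (eta (idm C V)) t = t.
Proof.
  apply Chom_ext; intros x hx; simpl.
  destruct (proj2_sig t x hx) as [U' [hx' [f [hs hr]]]].
  rewrite (hr x hx' hx), gcomp_eta, comp_id_l. reflexivity.
Qed.

Lemma Ccomp_id_r {U V : Opens T} (s : Chom U V) : Ccomp s (eta (idm C U)) = s.
Proof.
  apply Chom_ext; intros x hx; simpl. rewrite <- (incl_id C (sub_refl U)). apply gcomp_incl.
Qed.

Lemma eta_comp {U V W : Opens T} (g : hom C V W) (f : hom C U V) :
  Ccomp (eta g) (eta f) = eta (comp C g f).
Proof. apply Chom_ext; intros x hx; simpl. apply gcomp_eta. Qed.

Lemma assoc_core {V W Z Q : Opens T} (s : Chom W Z) (t : Chom V W) (hQ : sub Q V)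
  (g' : hom C Q W) (h' : hom C Q Z) :
  repon (proj1_sig t) g' -> repon (proj1_sig (Ccomp s t)) h' ->
  forall x (U' : Opens T) (hx : U' x) (f : hom C U' Q),
    gcomp s (germ_of hx (comp C g' f)) = germ_of hx (comp C h' f).
Proof.
  intros rt rst x U' hx f.
  destruct (surj2 (germ_of hx f)) as [y [hyQ [phi Hphi]]].
  assert (hyV := hQ y hyQ).
  assert (E0 : gcomp s (germ_of hyQ g') = germ_of hyQ h').
  { rewrite <- (rt y hyQ hyV), <- (rst y hyQ hyV). reflexivity. }
  destruct (gcomp_ex s (germ_of hyQ g')) as [W' [hW [U4 [hy4 [f4 [g4 [e4 r4]]]]]]].
  rewrite (gcomp_ch s _ W' hW U4 hy4 f4 g4 e4 r4) in E0.
  apply germ_of_rel in e4. destruct e4 as [Q1 [hy1 [a1 [b1 eq1]]]].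
  apply germ_of_rel in E0. destruct E0 as [Q2 [hy2 [a2 [b2 eq2]]]].
  unfold rmap, rdom, mkrep in *; simpl in *.
  assert (hyR : ointer Q1 Q2 y) by (split; assumption).
  pose (bR := fun z (hz : ointer Q1 Q2 z) => b1 z (proj1 hz)).
  pose (aR := fun z (hz : ointer Q1 Q2 z) => a1 z (proj1 hz)).
  destruct (stalk_rep phi (ointer Q1 Q2) hyR) as [U5 [hx5 [k Hk]]].
  assert (E := stalk_compat phi Q (ointer Q1 Q2) bR hyR hyQ U5 hx5 k Hk). rewrite Hphi in E.
  rewrite (germ_postcomp hx hx5 f _ g' E), (germ_postcomp hx hx5 f _ h' E).
  assert (K1 : comp C g' (incl C bR) = comp C (incl C hW) (comp C f4 (incl C aR))).
  { rewrite <- (cii g' b1 (@sub_interl _ _ Q1 Q2) bR), <- eq1, comp_assoc. apply cii. }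
  assert (K2 : comp C (comp C g4 f4) (incl C aR) = comp C h' (incl C bR)).
  { rewrite <- (cii (comp C g4 f4) a2 (@sub_interr _ _ Q1 Q2) aR), eq2. apply cii. }
  rewrite comp_assoc, K1, <- comp_assoc, (gcomp_rep s hW g4 hx5 _ r4).
  rewrite !comp_assoc, K2. reflexivity.
Qed.

Lemma Ccomp_assoc {U V W Z : Opens T} (s : Chom W Z) (t : Chom V W) (r : Chom U V) :
  Ccomp s (Ccomp t r) = Ccomp (Ccomp s t) r.
Proof.
  apply Chom_ext; intros x hx; simpl. generalize (proj1_sig r x hx) as g0; intro g0.
  destruct (surj2 g0) as [y [hy [phi Hs]]].
  destruct (proj2_sig t y hy) as [V1 [hy1 [g1 [hs1 hr1]]]].
  destruct (proj2_sig (Ccomp s t) y hy) as [V3 [hy3 [h [hs3 hr3]]]].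
  assert (hyQ : ointer V1 V3 y) by (split; assumption).
  pose (hQV := fun z (hz : ointer V1 V3 z) => hs1 z (proj1 hz)).
  destruct (stalk_rep phi (ointer V1 V3) hyQ) as [U' [hx' [f Hf]]].
  assert (E := stalk_compat phi V (ointer V1 V3) hQV hyQ hy U' hx' f Hf). subst g0. rewrite E.
  assert (L : gcomp t (germ_of hx' (comp C (incl C hQV) f))
              = germ_of hx' (comp C g1 (comp C (incl C (@sub_interl _ _ V1 V3)) f))).
  { rewrite <- (gcomp_rep t hs1 g1 hx' _ hr1), comp_assoc, (incl_comp C hs1 _ hQV). reflexivity. }
  assert (R : gcomp (Ccomp s t) (germ_of hx' (comp C (incl C hQV) f))
              = germ_of hx' (comp C h (comp C (incl C (@sub_interr _ _ V1 V3)) f))).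
  { rewrite <- (gcomp_rep (Ccomp s t) hs3 h hx' _ hr3), comp_assoc, (incl_comp C hs3 _ hQV). reflexivity. }
  rewrite L, R, !comp_assoc. apply (assoc_core s t hQV); apply repon_restr; assumption.
Qed.

Definition Chat : PreCat T := {|
  hom := Chom;
  comp := fun U V W s t => Ccomp s t;
  idm := fun U => eta (idm C U);
  incl := fun U V h => eta (incl C h);
  comp_assoc := fun U V W Z h g f => Ccomp_assoc h g f;
  comp_id_l := fun U V f => Ccomp_id_l f;
  comp_id_r := fun U V f => Ccomp_id_r f;
  incl_id := fun U h => f_equal eta (incl_id C h);
  incl_comp := fun U V W h1 h2 h3 => eq_trans (eta_comp _ _) (f_equal eta (incl_comp C h1 h2 h3))
|}.

Definition etaM : PPMor C Chat := {|
  fmap := fun U V f => (eta f : hom Chat U V);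
  fmap_comp := fun U V W g f => eq_sym (eta_comp g f);
  fmap_id := fun U => eq_refl;
  fmap_incl := fun U V h => eq_refl
|}.

Definition ev {x : X} {V : Opens T} (a : rep Chat x V) : germ C x V :=
  proj1_sig (rmap a : Chom (rdom a) V) x (rpt a).

Lemma ev_rel {x : X} {V : Opens T} (a b : rep Chat x V) : germ_rel a b <-> ev a = ev b.
Proof.
  split.
  - intros [W [hxW [ha [hb e]]]]. unfold ev.
    assert (E := f_equal (fun s : Chom W V => proj1_sig s x hxW) e). simpl in E.
    rewrite (gcomp_incl (rmap a) ha hxW (ha x hxW)), (gcomp_incl (rmap b) hb hxW (hb x hxW)) in E.
    replace (rpt a) with (ha x hxW) by apply proof_irrelevance.
    replace (rpt b) with (hb x hxW) by apply proof_irrelevance. exact E.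
  - destruct a as [Ua [hxa s]], b as [Ub [hxb t]]. unfold ev, rmap, rpt, rdom; simpl. intro E.
    destruct (proj2_sig s x hxa) as [U1 [hx1 [f1 [hs1 hr1]]]].
    destruct (proj2_sig t x hxb) as [U2 [hx2 [f2 [hs2 hr2]]]].
    rewrite (hr1 x hx1 hxa), (hr2 x hx2 hxb) in E.
    apply germ_of_rel in E. destruct E as [Q [hxQ [a1 [b2 eq]]]].
    unfold rmap, rdom, mkrep in *; simpl in *.
    exists Q. split; [exact hxQ|].
    exists (fun z hz => hs1 z (a1 z hz)), (fun z hz => hs2 z (b2 z hz)). simpl.
    apply Chom_ext; intros z hz. simpl.
    rewrite (gcomp_incl s _ hz (hs1 z (a1 z hz))), (gcomp_incl t _ hz (hs2 z (b2 z hz))).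
    rewrite (hr1 z (a1 z hz)), (hr2 z (b2 z hz)).
    rewrite <- (germ_restr a1 hz (a1 z hz) f1), <- (germ_restr b2 hz (b2 z hz) f2), eq. reflexivity.
Qed.

Lemma Ehat_wf {x : X} {V : Opens T} (G : germ Chat x V) :
  exists c0, forall c, (exists a, germ_mem G a /\ germ_mem (ev a) c) <-> germ_rel c0 c.
Proof.
  destruct (germ_has_mem G) as [a0 H0]. destruct (proj2_sig (ev a0)) as [c0 Hc0].
  exists c0. intro c. rewrite <- Hc0. split.
  - intros [a [Ha Hc]]. assert (E : ev a0 = ev a) by (apply ev_rel; eapply mem_mem_rel; eauto).
    rewrite E. exact Hc.
  - intro Hc. exists a0. auto.
Qed.

Definition Ehat {x : X} {V : Opens T} (G : germ Chat x V) : germ C x V :=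
  exist _ (fun c => exists a, germ_mem G a /\ germ_mem (ev a) c) (Ehat_wf G).

Lemma Ehat_mem {x : X} {V : Opens T} (G : germ Chat x V) a : germ_mem G a -> Ehat G = ev a.
Proof.
  intro Ha. apply sig_eq; simpl. apply functional_extensionality; intro c.
  apply propositional_extensionality. split.
  - intros [a' [Ha' Hc]]. assert (E : ev a' = ev a) by (apply ev_rel; eapply mem_mem_rel; eauto).
    rewrite E in Hc; exact Hc.
  - intro Hc. exists a; auto.
Qed.

Lemma Ehat_of {x : X} {V U : Opens T} (hx : U x) (s : hom Chat U V) :
  Ehat (germ_of hx s) = proj1_sig (s : Chom U V) x hx.
Proof. apply (Ehat_mem _ (mkrep hx s)). apply grel_refl. Qed.

Lemma Ehat_inj {x : X} {V : Opens T} (G1 G2 : germ Chat x V) : Ehat G1 = Ehat G2 -> G1 = G2.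
Proof.
  intro E. destruct (germ_has_mem G1) as [a1 H1]. destruct (germ_has_mem G2) as [a2 H2].
  rewrite (Ehat_mem _ _ H1), (Ehat_mem _ _ H2) in E. apply ev_rel in E.
  apply (mem_mem_eq G1 G2 a2); [exact (mem_rel G1 a1 a2 H1 E) | exact H2].
Qed.

Lemma Einv_wf {x : X} {V : Opens T} (c : germ C x V) :
  exists a0 : rep Chat x V, forall a, ev a = c <-> germ_rel a0 a.
Proof.
  destruct (germ_rep c) as [U [hx [f Hc]]]. exists (mkrep (C:=Chat) hx (eta f : hom Chat U V)).
  intro a. rewrite ev_rel. change (ev (mkrep (C:=Chat) hx (eta f : hom Chat U V))) with (germ_of hx f).
  subst c. split; intro H; symmetry; exact H.
Qed.

Definition Einv {x : X} {V : Opens T} (c : germ C x V) : germ Chat x V :=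
  exist _ (fun a => ev a = c) (Einv_wf c).

Lemma Ehat_Einv {x : X} {V : Opens T} (c : germ C x V) : Ehat (Einv c) = c.
Proof.
  destruct (Einv_wf c) as [a0 H0].
  assert (Ha0 : germ_mem (Einv c) a0) by (change (ev a0 = c); apply H0; apply grel_refl).
  rewrite (Ehat_mem _ _ Ha0). exact Ha0.
Qed.

Lemma S_wf {x y : X} (phi : stalk_lim Chat x y) :
  forall (V V' : Opens T) (h : sub V' V) (hy' : V' y) (hy : V y) (a : rep C x V'),
    germ_mem (Ehat (comp_of phi hy')) a ->
    Ehat (comp_of phi hy) = germ_of (rpt a) (comp C (incl C h) (rmap a)).
Proof.
  intros V V' h hy' hy a Ha.
  destruct (germ_has_mem (comp_of phi hy')) as [b Hb].
  assert (E := proj2_sig phi V V' h hy' hy b Hb). unfold comp_of. rewrite E.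
  rewrite Ehat_of. simpl.
  rewrite (Ehat_mem _ _ Hb) in Ha. apply germ_eq_mem in Ha. unfold ev in Ha.
  rewrite Ha. apply gcomp_eta.
Qed.

Definition Sst {x y : X} (phi : stalk_lim Chat x y) : stalk_lim C x y :=
  exist _ (fun (V : Opens T) (hy : V y) => Ehat (comp_of phi hy)) (S_wf phi).

Lemma T_wf {x y : X} (phi : stalk_lim C x y) :
  forall (V V' : Opens T) (h : sub V' V) (hy' : V' y) (hy : V y) (a : rep Chat x V'),
    germ_mem (Einv (comp_of phi hy')) a ->
    Einv (comp_of phi hy) = germ_of (rpt a) (comp Chat (incl Chat h) (rmap a)).
Proof.
  intros V V' h hy' hy a Ha. apply Ehat_inj. rewrite Ehat_Einv, Ehat_of. simpl.
  change (ev a = comp_of phi hy') in Ha. unfold ev in Ha.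
  destruct (stalk_rep phi V' hy') as [U [hx [f Hf]]].
  rewrite (stalk_compat phi V V' h hy' hy U hx f Hf).
  rewrite Ha, Hf. symmetry; apply gcomp_eta.
Qed.

Definition Tst {x y : X} (phi : stalk_lim C x y) : stalk_lim Chat x y :=
  exist _ (fun (V : Opens T) (hy : V y) => Einv (comp_of phi hy)) (T_wf phi).

Lemma S_T {x y : X} (phi : stalk_lim C x y) : Sst (Tst phi) = phi.
Proof. apply stalk_ext; intros V hy. exact (Ehat_Einv (comp_of phi hy)). Qed.

Lemma S_inj {x y : X} (p q : stalk_lim Chat x y) : Sst p = Sst q -> p = q.
Proof.
  intro E. apply stalk_ext; intros V hy. apply Ehat_inj.
  exact (f_equal (fun r => comp_of r hy) E).
Qed.

Lemma Chat_cond2 : cond2 Chat.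
Proof.
  intros V x. split.
  - intros [[y1 h1] p1] [[y2 h2] p2] E. simpl in E.
    assert (E' : comp_of (Sst p1) h1 = comp_of (Sst p2) h2) by exact (f_equal Ehat E).
    assert (Heq := proj1 (HC2 V x)
      (existT (fun y0 : {y0 : X | V y0} => stalk_lim C x (proj1_sig y0)) (exist _ y1 h1) (Sst p1))
      (existT (fun y0 : {y0 : X | V y0} => stalk_lim C x (proj1_sig y0)) (exist _ y2 h2) (Sst p2)) E').
    assert (Ey : y1 = y2) by exact (f_equal (fun p => proj1_sig (projT1 p)) Heq). subst y2.
    assert (Eh : h1 = h2) by apply proof_irrelevance. subst h2.
    apply inj_pair2 in Heq. apply S_inj in Heq. subst p2. reflexivity.
  - intro c. destruct (proj2 (HC2 V x) (Ehat c)) as [[[y hy] phi] E]. simpl in E.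
    exists (existT (fun y0 : {y0 : X | V y0} => stalk_lim Chat x (proj1_sig y0)) (exist _ y hy) (Tst phi)).
    simpl. apply Ehat_inj. rewrite <- E. exact (Ehat_Einv (comp_of phi hy)).
Qed.

Lemma isid_T {x : X} (ix : stalk_lim C x x) : is_id ix -> is_id (Tst ix).
Proof.
  intros H W hx. apply Ehat_inj. rewrite Ehat_of. simpl.
  change (Ehat (Einv (comp_of ix hx)) = germ_of hx (idm C W)). rewrite Ehat_Einv. apply H.
Qed.

Lemma crel_T {x y z : X} (ps : stalk_lim Chat y z) (ph : stalk_lim Chat x y) (ch : stalk_lim Chat x z) :
  comp_rel (Sst ps) (Sst ph) (Sst ch) -> comp_rel ps ph ch.
Proof.
  intros H W hz. destruct (H W hz) as [V [hy [g [U [hx [f [m1 [m2 e]]]]]]]].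
  exists V, hy, (eta g : hom Chat V W), U, hx, (eta f : hom Chat U V).
  apply germ_mem_iff in m1. apply germ_mem_iff in m2.
  split; [|split].
  - apply germ_mem_iff. apply Ehat_inj. rewrite Ehat_of. exact m1.
  - apply germ_mem_iff. apply Ehat_inj. rewrite Ehat_of. exact m2.
  - apply Ehat_inj. rewrite Ehat_of. simpl. rewrite gcomp_eta. exact e.
Qed.

Lemma Chat_cond3 : cond3 C -> cond3 Chat.
Proof.
  intros HC3 x y ph. destruct (HC3 x y (Sst ph)) as [ps [ix [iy [Hx [Hy [H1 H2]]]]]].
  exists (Tst ps), (Tst ix), (Tst iy).
  split; [apply isid_T; exact Hx|]. split; [apply isid_T; exact Hy|].
  split; apply crel_T; rewrite !S_T; assumption.
Qed.

Lemma Chat_cond4 : cond4 Chat.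
Proof.
  intros V U I Ui hsub hcov f Hc.
  pose (g := fun x (hx : U x) =>
    let (i, hi) := constructive_indefinite_description _ (hcov x hx) in proj1_sig (f i : Chom (Ui i) V) x hi).
  assert (Hg : forall x (hx : U x) i (hi : Ui i x), g x hx = proj1_sig (f i : Chom (Ui i) V) x hi).
  { intros x hx i hi. unfold g. destruct (constructive_indefinite_description _ (hcov x hx)) as [j hj].
    assert (E := f_equal (fun s : Chom (ointer (Ui j) (Ui i)) V => proj1_sig s x (conj hj hi)) (Hc j i)).
    simpl in E.
    rewrite (gcomp_incl (f j) _ _ hj), (gcomp_incl (f i) _ _ hi) in E. exact E. }
  assert (Hloc : locrep g).
  { intros x hx. destruct (hcov x hx) as [i hi].
    destruct (proj2_sig (f i : Chom (Ui i) V) x hi) as [U' [hx' [f1 [hs hr]]]].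
    exists U', hx', f1. split; [intros z hz; exact (hsub i z (hs z hz))|].
    intros z hz hz'. rewrite (Hg z hz' i (hs z hz)). apply hr. }
  exists (exist _ g Hloc : hom Chat U V). split.
  - intro i. apply Chom_ext; intros z hz. simpl. rewrite (gcomp_incl _ _ _ (hsub i z hz)). simpl. apply Hg.
  - intros g' Hg'. apply Chom_ext; intros z hz. simpl. destruct (hcov z hz) as [i hi].
    rewrite (Hg z hz i hi). rewrite <- (Hg' i). simpl. rewrite (gcomp_incl g' _ hi hz). reflexivity.
Qed.

Section Univ.
Context (D : PreCat T) (HD4 : cond4 D) (F : PPMor C D).

Lemma D_loc_eq {Q V : Opens T} (a b : hom D Q V) :
  (forall x, Q x -> exists (W : Opens T) (hW : sub W Q), W x /\ comp D a (incl D hW) = comp D b (incl D hW)) ->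
  a = b.
Proof.
  intro H.
  pose (I := {W : Opens T | exists hW : sub W Q, comp D a (incl D hW) = comp D b (incl D hW)}).
  pose (Ui := fun i : I => proj1_sig i).
  assert (hsub : forall i, sub (Ui i) Q). { intro i. destruct (proj2_sig i) as [hW _]. exact hW. }
  assert (hcov : forall x, Q x -> exists i, Ui i x).
  { intros x hx. destruct (H x hx) as [W [hW [hxW e]]]. exists (exist _ W (ex_intro _ hW e)). exact hxW. }
  destruct (HD4 V Q I Ui hsub hcov (fun i => comp D a (incl D (hsub i)))) as [g [Hg Hu]].
  - intros i j. rewrite (cii a (hsub i) _ (fun z (hz : ointer (Ui i) (Ui j) z) => hsub i z (proj1 hz))).
    rewrite (cii a (hsub j) _ (fun z (hz : ointer (Ui i) (Ui j) z) => hsub i z (proj1 hz))). reflexivity.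
  - rewrite (Hu a (fun i => eq_refl)). symmetry. apply Hu. intros [W [hW e]].
    rewrite (incl_pi (hsub (exist _ W (ex_intro _ hW e))) hW). symmetry; exact e.
Qed.

Definition Idx {U V : Opens T} (s : Chom U V) : Type :=
  {d : {U' : Opens T & hom C U' V} | sub (projT1 d) U /\ repon (proj1_sig s) (projT2 d)}.

Lemma G_ex {U V : Opens T} (s : Chom U V) :
  exists g : hom D U V,
    (forall i : Idx s, comp D g (incl D (proj1 (proj2_sig i))) = fmap F (projT2 (proj1_sig i))) /\
    (forall g', (forall i : Idx s, comp D g' (incl D (proj1 (proj2_sig i))) = fmap F (projT2 (proj1_sig i))) -> g' = g).
Proof.
  apply (HD4 V U (Idx s) (fun i => projT1 (proj1_sig i)) (fun i => proj1 (proj2_sig i))).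
  - intros x hx. destruct (proj2_sig s x hx) as [U' [hx' [f [hs hr]]]].
    exists (exist _ (existT _ U' f) (conj hs hr)). exact hx'.
  - intros [[Ui fi] [hsi hri]] [[Uj fj] [hsj hrj]]. simpl in *.
    apply D_loc_eq. intros z [hzi hzj].
    assert (G : germ_of hzi fi = germ_of hzj fj).
    { rewrite <- (hri z hzi (hsi z hzi)), <- (hrj z hzj (hsi z hzi)). reflexivity. }
    apply germ_of_rel in G. destruct G as [W [hzW [a1 [b1 e]]]].
    unfold rmap, rdom, mkrep in *; simpl in *.
    exists W, (fun w hw => conj (a1 w hw) (b1 w hw)). split; [exact hzW|].
    rewrite (cii (fmap F fi) _ _ a1), (cii (fmap F fj) _ _ b1).
    rewrite <- !(fmap_incl F), <- !(fmap_comp F), e. reflexivity.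
Qed.

Definition Gmap {U V : Opens T} (s : Chom U V) : hom D U V :=
  proj1_sig (constructive_indefinite_description _ (G_ex s)).

Lemma GP {U V U' : Opens T} (s : Chom U V) (hs : sub U' U) (f : hom C U' V) :
  repon (proj1_sig s) f -> comp D (Gmap s) (incl D hs) = fmap F f.
Proof.
  intro r. unfold Gmap. destruct (constructive_indefinite_description _ (G_ex s)) as [g Hgp]. simpl. destruct Hgp as [Hg _].
  pose proof (Hg (exist _ (existT _ U' f) (conj hs r))) as K. simpl in K. rewrite (incl_pi hs (proj1 (conj hs r))). exact K.
Qed.

Lemma GU {U V : Opens T} (s : Chom U V) (d : hom D U V) :
  (forall (U' : Opens T) (hs : sub U' U) (f : hom C U' V), repon (proj1_sig s) f -> comp D d (incl D hs) = fmap F f) ->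
  d = Gmap s.
Proof.
  intro H. unfold Gmap. destruct (constructive_indefinite_description _ (G_ex s)) as [g Hgp]. simpl. destruct Hgp as [_ Hu].
  apply Hu. intros [[U' f] [hs r]]. simpl. apply H, r.
Qed.

Lemma G_eta {U V : Opens T} (f : hom C U V) : Gmap (eta f) = fmap F f.
Proof.
  rewrite <- (incl_refl_id (Gmap (eta f)) (sub_refl U)). apply GP.
  intros z hz hz'. apply germ_pi.
Qed.

Lemma G_comp {U V W : Opens T} (s : Chom V W) (t : Chom U V) : Gmap (Ccomp s t) = comp D (Gmap s) (Gmap t).
Proof.
  apply D_loc_eq. intros x hx.
  destruct (comp_local s t x hx) as [Q [hxQ [hQ [U1 [hU1 [f1 [hQ1 [V' [hV [f [g [r1 [r2 [e H]]]]]]]]]]]]]].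
  exists Q, hQ. split; [exact hxQ|].
  rewrite (GP (Ccomp s t) hQ (comp C g f)).
  2: { intros z hz hz'. apply H. }
  rewrite <- comp_assoc, <- (cii (Gmap t) hU1 hQ1 hQ), (GP t hU1 f1 r1), <- (fmap_incl F),
    <- (fmap_comp F), <- e, (fmap_comp F (incl C hV) f), comp_assoc, (fmap_incl F), (GP s hV g r2),
    <- (fmap_comp F).
  reflexivity.
Qed.

Definition GM : PPMor Chat D := {|
  fmap := fun (U V : Opens T) (s : hom Chat U V) => Gmap (s : Chom U V);
  fmap_comp := fun U V W g f => G_comp g f;
  fmap_id := fun U => eq_trans (G_eta (idm C U)) (fmap_id F U);
  fmap_incl := fun U V h => eq_trans (G_eta (incl C h)) (fmap_incl F h)
|}.

Lemma G_unique (G' : PPMor Chat D) :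
  (forall (U V : Opens T) (f : hom C U V), fmap G' (fmap etaM f) = fmap F f) ->
  forall (U V : Opens T) (g : hom Chat U V), fmap G' g = Gmap g.
Proof.
  intros H U V g. apply GU. intros U' hs f r.
  rewrite <- (fmap_incl G' hs), <- (fmap_comp G').
  assert (E : comp Chat g (incl Chat hs) = (eta f : hom Chat U' V)).
  { apply Chom_ext; intros z hz. simpl. rewrite (gcomp_incl g hs hz (hs z hz)). apply r. }
  rewrite E. exact (H U' V f).
Qed.

End Univ.

End Hat.

Theorem mainTheorem7 (X : Type) (T : topology X) (HT1 : T1 T)
    (C : PreCat T) (HC : pre_pseudogroup C) :
  exists (Ch : PreCat T) (eta : PPMor C Ch),
    pseudogroup_sheaf Ch /\
    forall (D : PreCat T), pseudogroup_sheaf D ->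
    forall F : PPMor C D,
      exists G : PPMor Ch D,
        (forall U V (f : hom C U V), fmap G (fmap eta f) = fmap F f) /\
        (forall G' : PPMor Ch D,
           (forall U V (f : hom C U V), fmap G' (fmap eta f) = fmap F f) ->
           forall U V (g : hom Ch U V), fmap G' g = fmap G g).
Proof.
  destruct HC as [HC2 HC3].
  exists (Chat C HC2), (etaM C HC2). split.
  - split; [split|].
    + apply Chat_cond2.
    + apply Chat_cond3; exact HC3.
    + apply Chat_cond4.
  - intros D [_ HD4] F. exists (GM C HC2 D HD4 F). split.
    + intros U V f. simpl. apply G_eta.
    + intros G' H U V g. simpl. apply (G_unique C HC2 D HD4 F G' H).
Qed.
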